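(* For $n\geq 2$ and $0\le q\le n-1$, the reduced simplicial homology satisfies $\widetilde H_q(X(n),\mathbb Z)\cong\mathbb Z^{\beta(n,q)}$, where $\beta(n,q)$ is the number of partitions of $[n]$ into $q+1$ blocks such that every block is a proper subset of $[n]$ of size at least $2$. In particular $\widetilde H_q(X(n),\mathbb Z)=0$ if $q=0$ or $q>\lfloor n/2\rfloor-1$, and for $q>0$, $$\beta(n,q)=\sum_{i=0}^{q+1}(-1)^i\binom{n}{i}\left\{{n-i\atop q-i+1}\right\},$$ where $\left\{{m\atop k}\right\}$ denotes the Stirling number of the second kind (number of partitions of an $m$-set into $k$ non-empty blocks).
   Context: For $n\ge 2$, $X(n)$ is the simplicial complex whose vertices are the proper non-empty subsets $\varnothing\neq x\subsetneq[n]$, $[n]=\{1,\dots,n\}$, and whose $q$-faces are the sets $\{x_0,\dots,x_q\}$ of $q+1$ pairwise disjoint proper non-empty subsets of $[n]$. (It is the matching complex of the complete hypergraph on $[n]$ with its isolated vertex $[n]$ removed.) Reduced homology uses the augmentation $C_0\to C_{-1}=\mathbb Z$. *)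

(* Defs.v *)
From mathcomp Require Import all_boot all_order all_algebra.
Set Implicit Arguments. Unset Strict Implicit. Unset Printing Implicit Defensive.
Import GRing.Theory.
Local Open Scope ring_scope.

(* A face with k vertices has
   dimension k-1; the empty face (k = 0) gives C_{-1} = Z, i.e. the
   augmentation, so the homology below is REDUCED homology. *)
Definition is_vertex (n : nat) (x : {set 'I_n}) : bool :=
  (x != set0) && (x != [set: 'I_n]).

Definition is_face (n : nat) (s : {set {set 'I_n}}) : bool :=
  [forall x in s, is_vertex x] &&
  [forall x in s, forall y in s, (x != y) ==> [disjoint x & y]].

Definition chain (n : nat) := {ffun {set {set 'I_n}} -> int}.

(* c is a chain of k-vertex faces (i.e. an element of C_{k-1}). *)
Definition is_chain (n k : nat) (c : chain n) : Prop :=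
  forall s, c s != 0 -> is_face s /\ #|s| = k.

(* Orientation: vertices of a face are ordered by enum_rank on {set 'I_n};
   pos s v = index of v in the ordered face s. *)
Definition pos (n : nat) (s : {set {set 'I_n}}) (v : {set 'I_n}) : nat :=
  #|[set w in s | (enum_rank w < enum_rank v)%N]|.

(* Boundary map C_{k-1} -> C_{k-2}:
   d [v_0,...,v_{k-1}] = sum_i (-1)^i [v_0,..,^v_i,..,v_{k-1}]. *)
Definition bd (n k : nat) (c : chain n) : chain n :=
  [ffun t => \sum_(s | is_face s && (#|s| == k)%N)
               \sum_(v in s) (if t == s :\ v then (-1) ^+ pos s v * c s else 0)].

Definition is_cycle (n q : nat) (c : chain n) : Prop :=
  @is_chain n q.+1 c /\ @bd n q.+1 c = 0.

Definition is_boundary (n q : nat) (c : chain n) : Prop :=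
  exists d, @is_chain n q.+2 d /\ c = @bd n q.+2 d.

(* H~_q(X(n), Z) = Z_q / B_q is isomorphic to Z^b : there is a group
   homomorphism from the cycle group Z_q onto Z^b whose kernel is B_q
   (first isomorphism theorem). *)
Definition reduced_homology_iso_Zpow (n q b : nat) : Prop :=
  exists f : chain n -> {ffun 'I_b -> int},
    (forall c1 c2, @is_cycle n q c1 -> @is_cycle n q c2 ->
        f (c1 + c2) = f c1 + f c2) /\
    (forall y, exists c, @is_cycle n q c /\ f c = y) /\
    (forall c, @is_cycle n q c -> (f c = 0 <-> @is_boundary n q c)).

Definition beta (n q : nat) : nat :=
  #|[set P : {set {set 'I_n}} | [&& partition P [set: 'I_n], #|P| == q.+1 &
        [forall B in P, (2 <= #|B|)%N && (B != [set: 'I_n])]]]|.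

(* Stirling numbers of the second kind: partitions of an m-set into k
   non-empty blocks (mathcomp's partition excludes the empty block). *)
Definition stirling2 (m k : nat) : nat :=
  #|[set P : {set {set 'I_m}} | partition P [set: 'I_m] && (#|P| == k)]|.

(* Main.v *)
Require Import Defs.
From mathcomp Require Import all_boot all_order all_algebra.
From mathcomp Require Import ring zify.
Import GRing.Theory Num.Theory.
Local Open Scope ring_scope.
Set Implicit Arguments. Unset Strict Implicit. Unset Printing Implicit Defensive.


Section Hom.
Variable n : nat.
Local Notation V := {set 'I_n}.
Local Notation F := {set V}.
Implicit Types (s t a : F) (u v w x y : V) (c d z : chain n).

Definition rk v : nat := enum_rank v.
Definition sgn s v : int := (-1) ^+ pos s v.

Lemma rk_inj : injective rk.
Proof. by move=> x y /val_inj /enum_rank_inj. Qed.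

Lemma pos_U1 s v w : v \notin s -> v != w ->
  pos (v |: s) w = (pos s w + (rk v < rk w))%N.
Proof.
move=> vs vw; rewrite /pos.
have -> : [set x in v |: s | (enum_rank x < enum_rank w)%N] =
   (if (rk v < rk w)%N then v |: [set x in s | (enum_rank x < enum_rank w)%N]
    else [set x in s | (enum_rank x < enum_rank w)%N]).
  apply/setP => x; rewrite !inE; case: (eqVneq x v) => [->|xv] /=.
    by case: ifP => h; rewrite ?inE ?eqxx //= (negbTE vs) h.
  by case: ifP => h; rewrite ?inE ?(negbTE xv).
case: ifP => h; last by rewrite addn0.
by rewrite cardsU1 inE (negbTE vs) addnC.
Qed.

Lemma pos_U1self s v : pos (v |: s) v = pos s v.
Proof.
rewrite /pos; apply: eq_card => x; rewrite !inE.
by case: (eqVneq x v) => [->|] //=; rewrite ltnn andbF.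
Qed.

Lemma sgn_U1 s v w : v \notin s -> v != w ->
  sgn (v |: s) w = sgn s w * (-1) ^+ (rk v < rk w).
Proof. by move=> vs vw; rewrite /sgn pos_U1 // exprD. Qed.

Lemma sgn_U1self s v : sgn (v |: s) v = sgn s v.
Proof. by rewrite /sgn pos_U1self. Qed.

Lemma sgn_swap v w : v != w ->
  (-1) ^+ (rk v < rk w) * (-1) ^+ (rk w < rk v) = -1 :> int.
Proof.
move=> vw; case: (ltngtP (rk v) (rk w)) => h //=; rewrite ?expr0 ?expr1 ?mulr1 ?mul1r //.
by move: vw; rewrite (rk_inj h) eqxx.
Qed.

Lemma sgn_sq s v : sgn s v * sgn s v = 1.
Proof. by rewrite /sgn -exprD -signr_odd addnn odd_double. Qed.

Definition bdcond k t v := [&& v \notin t, is_face (v |: t) & #|v |: t| == k].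

Lemma bdE k c t : bd k c t =
  \sum_(v | bdcond k t v) sgn (v |: t) v * c (v |: t).
Proof.
rewrite ffunE.
rewrite (eq_bigr (fun s => \sum_v (if (v \in s) && (t == s :\ v) then
         (-1) ^+ pos s v * c s else 0))); last first.
  by move=> s _; rewrite [RHS](bigID (fun v => v \in s)) /= [X in _ = _ + X]big1
       ?addr0 => [|v /negbTE ->]; [apply: eq_bigr => v ->|].
rewrite exchange_big /= [RHS]big_mkcond /=; apply: eq_bigr => v _.
case: (boolP (bdcond k t v)) => [/and3P[vt fa sz]|nc].
  rewrite (bigD1 (v |: t)) /=; last by rewrite fa sz.
  rewrite setU11 setU1K // eqxx /= big1 ?addr0 // => s /andP[/andP[_ _] ne].
  case: ifP => // /andP[vs /eqP ts]; move: ne; rewrite ts setD1K ?eqxx //.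
rewrite big1 // => s /andP[fs szs]; case: ifP => // /andP[vs /eqP ts].
by move: nc; rewrite /bdcond ts setD1K // !inE eqxx fs szs.
Qed.

Lemma faceP s : reflect ((forall x, x \in s -> is_vertex x) /\
  (forall x y, x \in s -> y \in s -> x != y -> [disjoint x & y])) (is_face s).
Proof.
apply: (iffP andP) => [[/forall_inP h1 /forall_inP h2]|[h1 h2]]; split.
- exact: h1.
- by move=> x y xs ys xy; move/forall_inP: (h2 x xs) => /(_ y ys) /implyP; apply.
- by apply/forall_inP.
- by apply/forall_inP => x xs; apply/forall_inP => y ys; apply/implyP; apply: h2.
Qed.

Lemma face_sub s t : is_face s -> t \subset s -> is_face t.
Proof.
move=> /faceP[h1 h2] /subsetP ts; apply/faceP; split.
  by move=> x /ts; apply: h1.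
by move=> x y /ts xs /ts ys; apply: h2.
Qed.

Lemma faceU1 v t : is_face (v |: t) =
  [&& is_vertex v, is_face t & [forall x in t, (x != v) ==> [disjoint v & x]]].
Proof.
apply/idP/idP => [fa|/and3P[vv ft /forall_inP dv]].
  rewrite (face_sub fa (subsetUr _ _)); move/faceP: fa => [h1 h2].
  rewrite (h1 v (setU11 _ _)) /=; apply/forall_inP => x xt; apply/implyP => xv.
  by apply: h2; rewrite ?setU11 ?inE ?xt ?orbT // eq_sym.
move/faceP: ft => [h1 h2]; apply/faceP; split.
  by move=> x; rewrite in_setU1 => /orP[/eqP->|/h1].
have dv' x : x \in t -> x != v -> [disjoint v & x] by move=> xt; move/implyP: (dv x xt).
move=> x y; rewrite !in_setU1 => /orP[/eqP->|xt] /orP[/eqP->|yt]; rewrite ?eqxx // => xy.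
- by apply: dv'; rewrite // eq_sym.
- by rewrite disjoint_sym; apply: dv'; rewrite // eq_sym.
- exact: h2.
Qed.

Lemma vertex_n0 v : is_vertex v -> exists i, i \in v.
Proof. by case/andP => /set0Pn. Qed.

Lemma bdD k c1 c2 : bd k (c1 + c2) = bd k c1 + bd k c2.
Proof.
by apply/ffunP => t; rewrite [RHS]ffunE !bdE -big_split; apply: eq_bigr => v _; rewrite ffunE mulrDr.
Qed.

Lemma bdN k c : bd k (- c) = - bd k c.
Proof.
apply/ffunP => t; rewrite [RHS]ffunE !bdE -sumrN; apply: eq_bigr => v _.
by rewrite ffunE mulrN.
Qed.

Lemma bdB k c1 c2 : bd k (c1 - c2) = bd k c1 - bd k c2.
Proof. by rewrite bdD bdN. Qed.

Lemma bdZ k (r : int) c : bd k (c *~ r) = bd k c *~ r.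
Proof.
apply/ffunP => t; rewrite [RHS]ffunMzE !bdE mulrz_suml; apply: eq_bigr => v _.
by rewrite (ffunMzE c) mulrzAr.
Qed.

Lemma bd0 k : bd k (0 : chain n) = 0.
Proof. by apply/ffunP => t; rewrite [RHS]ffunE bdE big1 // => v _; rewrite ffunE mulr0. Qed.

Lemma bd_nz k c t : bd k c t != 0 -> exists2 v, bdcond k t v & c (v |: t) != 0.
Proof.
rewrite bdE => /eqP h; apply/exists_inP; apply/negP => /exists_inP hn; apply: h.
rewrite big1 // => v bv; case: (eqVneq (c (v |: t)) 0) => [->|cv]; first by rewrite mulr0.
by case: hn; exists v.
Qed.

Lemma chain_bd k c : is_chain k (bd k.+1 c).
Proof.
move=> t /bd_nz[v /and3P[vt fa /eqP sz] _]; split.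
  exact: face_sub fa (subsetUr _ _).
by move: sz; rewrite cardsU1 vt => -[].
Qed.

Definition crit s := partition s [set: 'I_n] &&
  [forall B in s, (2 <= #|B|)%N && (B != [set: 'I_n])].

Lemma bd_crit k c t : partition t [set: 'I_n] -> bd k c t = 0.
Proof.
move=> /and3P[/eqP cov _ _]; apply/eqP/negP => /negP /bd_nz[v /and3P[vt fa _] _].
move: fa; rewrite faceU1 => /and3P[vv _ /forall_inP dv].
have [i iv] := vertex_n0 vv.
have : i \in cover t by rewrite cov inE.
case/bigcupP => x xt ix.
have := dv x xt; rewrite (_ : x != v) /=; last by apply: contraNneq vt => <-.
by move/pred0P/(_ i); rewrite /= iv ix.
Qed.

Lemma bdbd k c : bd k (bd k.+1 c) = 0.
Proof.
apply/ffunP => t; rewrite [RHS]ffunE bdE.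
pose G v w := if [&& v \notin t, w \notin t, v != w, is_face (w |: (v |: t))
    & #|w |: (v |: t)| == k.+1]
  then sgn (v |: t) v * sgn (w |: (v |: t)) w * c (w |: (v |: t)) else 0.
transitivity (\sum_v \sum_w G v w).
  rewrite [RHS](bigID (bdcond k t)) /= [X in _ = _ + X]big1 ?addr0; last first.
    move=> v nb; rewrite big1 // => w _; rewrite /G; case: ifP => //.
    case/and5P => vt wt vw fw /eqP sw; case/negP: nb; rewrite /bdcond vt.
    rewrite (face_sub fw (subsetUr _ _)) /=.
    have wvt : w \notin v |: t by rewrite in_setU1 negb_or eq_sym vw wt.
    by move: sw; rewrite cardsU1 wvt add1n => -[->].
  apply: eq_bigr => v bv; rewrite bdE mulr_sumr.
  rewrite [RHS](bigID (bdcond k.+1 (v |: t))) /= [X in _ = _ + X]big1 ?addr0.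
    apply: eq_bigr => w bw; rewrite /G.
    case/and3P: bv => vt _ _; case/and3P: bw => wvt fw sw; move: wvt.
    by rewrite in_setU1 negb_or => /andP[wv wt]; rewrite vt wt eq_sym wv fw sw /= mulrA.
  move=> w nb; rewrite /G; case: ifP => //; case/and5P => vt wt vw fw sw.
  by case/negP: nb; rewrite /bdcond in_setU1 negb_or eq_sym vw wt fw sw.
have GA v w : G w v = - G v w.
  rewrite /G setUCA; case: (boolP [&& v \notin t, w \notin t, v != w, _ & _]).
    case/and5P => vt wt vw fw sw; rewrite wt vt eq_sym vw fw sw /=.
    have wvt : w \notin v |: t by rewrite in_setU1 negb_or eq_sym vw wt.
    have wv : w != v by rewrite eq_sym.
    rewrite !sgn_U1self (sgn_U1 wvt wv) sgn_U1self (sgn_U1 vt vw).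
    have := sgn_swap vw.
    case: (rk v < rk w)%N; case: (rk w < rk v)%N; rewrite ?expr0 ?expr1 //=.
    - by move=> _; rewrite mulr1 mulrN1 mulrN mulNr opprK (mulrC (sgn t w)).
    - by move=> _; rewrite mulr1 mulrN1 mulrN mulNr (mulrC (sgn t w)).
  move=> nc; case: ifP; rewrite ?oppr0 // => /and5P[wt vt wv fw sw].
  by case/negP: nc; rewrite vt wt eq_sym wv fw sw.
set S := \sum_v _.
have : S = - S.
  rewrite {1}/S exchange_big /= -sumrN; apply: eq_bigr => v _.
  by rewrite -sumrN; apply: eq_bigr => w _; rewrite GA.
by move/eqP; rewrite -addr_eq0 -mulr2n mulrn_eq0 => /eqP.
Qed.

Hypothesis n2 : (1 < n)%N.

Definition big s := [set x in s | (1 < #|x|)%N].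

Lemma big_sub s : big s \subset s.
Proof. by apply/subsetP => x; rewrite inE => /andP[]. Qed.

Lemma big_U1 s v : big (v |: s) = if (1 < #|v|)%N then v |: big s else big s.
Proof.
apply/setP => x; case: ifP => h; rewrite !inE; case: (eqVneq x v) => [->|xv] //=.
by rewrite h andbF.
Qed.

Lemma big_D1 s v : big (s :\ v) = big s :\ v.
Proof. by apply/setP => x; rewrite !inE andbA. Qed.

Lemma setD1U1 s u v : v != u -> (v |: s) :\ u = v |: (s :\ u).
Proof.
move=> vu; apply/setP => x; rewrite !inE; case: (eqVneq x v) => [->|] //=.
by rewrite vu.
Qed.

Lemma vertex1 (j : 'I_n) : is_vertex [set j].
Proof.
rewrite /is_vertex; apply/andP; split; first by apply/set0Pn; exists j; rewrite inE.
apply/negP => /eqP h; move: (cardsT 'I_n); rewrite -h cards1 card_ord => h1.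
by move: n2; rewrite -h1.
Qed.

Lemma small_vertex v : is_vertex v -> (#|v| <= 1)%N -> exists i, v = [set i].
Proof.
case/andP => v0 _ h; apply/cards1P; rewrite eqn_leq h /= card_gt0 //.
Qed.

Lemma big_of j x : j \in x -> x != [set j] -> (1 < #|x|)%N.
Proof.
move=> jx xj; have sub : [set j] \proper x.
  by rewrite properEneq eq_sym xj sub1set jx.
by move: (proper_card sub); rewrite cards1.
Qed.

Section Step.
Variables (k m : nat) (z : chain n) (P : F) (j : 'I_n).
Hypotheses (zc : is_chain k.+1 z) (zcyc : bd k.+1 z = 0)
  (zw : forall s, z s != 0 -> (#|big s| <= m)%N) (Pm : #|P| = m)
  (jN : forall x, x \in P -> j \notin x).

Let u := [set j].

Definition dd : chain n := [ffun t : F => if [&& u \in t, big t == P, is_face t & #|t| == k.+2]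
  then sgn t u * z (t :\ u) else 0].

Lemma dd_chain : is_chain k.+2 dd.
Proof. by move=> t; rewrite ffunE; case: ifP => [/and4P[_ _ f /eqP s]|]; rewrite ?eqxx. Qed.

Lemma dd_big t : dd t != 0 -> u \in t /\ big t = P.
Proof. by rewrite ffunE; case: ifP => [/and4P[ut /eqP bt _ _]|]; rewrite ?eqxx. Qed.

Lemma K2 t : bd k.+2 dd t != 0 -> big t \subset P.
Proof.
case/bd_nz => v /and3P[vt _ _] /dd_big[_ <-]; rewrite big_U1.
by case: ifP => // _; apply: subsetUr.
Qed.

Lemma u_small : (#|u| <= 1)%N. Proof. by rewrite cards1. Qed.

Lemma bigu s : big (u |: s) = big s.
Proof. by rewrite big_U1 ltnNge u_small. Qed.

Lemma K1 t : big t = P -> bd k.+2 dd t = z t.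
Proof.
move=> bt; rewrite bdE.
have [ftk|nft] := boolP (is_face t && (#|t| == k.+1)); last first.
  have -> : z t = 0 by apply/eqP; apply: contraNT nft => /zc[-> ->]; rewrite eqxx.
  rewrite big1 // => v /and3P[vt fa /eqP sz]; case/negP: nft.
  rewrite (face_sub fa (subsetUr _ _)) /=; move: sz; rewrite cardsU1 vt add1n.
  by case=> ->.
case/andP: ftk => ft /eqP st.
case: (boolP (u \in t)) => ut; last first.
  have bu : bdcond k.+2 t u.
    rewrite /bdcond ut cardsU1 ut st add1n eqxx andbT faceU1 vertex1 ft /=.
    apply/forall_inP => x xt; apply/implyP => xu.
    rewrite disjoints1; apply/negP => jx.
    have xP : x \in P by rewrite -bt inE xt (big_of jx xu).
    by move: (jN xP); rewrite jx.
  rewrite (bigD1 u) //= big1 ?addr0.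
    rewrite ffunE setU11 bigu bt eqxx /=.
    rewrite (_ : is_face (u |: t) && _); last by case/and3P: bu => _ -> ->.
    by rewrite setU1K // sgn_U1self mulrA sgn_sq mul1r.
  move=> v /andP[_ vu]; apply/eqP/negP => /negP; rewrite mulf_eq0 negb_or => /andP[_].
  move/dd_big => [] ; rewrite in_setU1 (negbTE ut) orbF eq_sym (negbTE vu) //.
set a := t :\ u.
have ta : t = u |: a by rewrite /a setD1K.
have ua : u \notin a by rewrite /a setD11.
have sa : #|a| = k by move: st; rewrite ta cardsU1 ua add1n => -[].
have uP : u \notin P by apply/negP => /jN; rewrite inE eqxx.
have ba : big a = P.
  rewrite /a big_D1 bt; apply/setP => x; rewrite !inE.
  by case: (eqVneq x u) => [->|] //=; rewrite (negbTE uP).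
have Pt : P \subset t by rewrite -bt big_sub.
have bua : bdcond k.+1 a u by rewrite /bdcond ua cardsU1 ua add1n sa eqxx -ta ft.
have cyc : sgn t u * z t +
    \sum_(v | bdcond k.+1 a v && (v != u)) sgn (v |: a) v * z (v |: a) = 0.
  by move: (congr1 (fun c : chain n => c a) zcyc); rewrite bdE ffunE (bigD1 u) //= -ta.
have eqL : \sum_(v | bdcond k.+2 t v) sgn (v |: t) v * dd (v |: t) =
    - sgn t u * \sum_(v | bdcond k.+1 a v && (v != u)) sgn (v |: a) v * z (v |: a).
  rewrite mulr_sumr big_mkcond [RHS]big_mkcond; apply: eq_bigr => v _.
  case: (boolP (1 < #|v|)%N) => vb.
    have vP : v \notin t -> v \notin P by apply: contra; apply: (subsetP Pt).
    have -> : (if bdcond k.+2 t v then sgn (v |: t) v * dd (v |: t) else 0) = 0.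
      case: ifP => // /and3P[vt _ _]; rewrite (_ : dd _ = 0) ?mulr0 //.
      apply/eqP/negP => /negP/dd_big[_]; rewrite big_U1 vb bt => h.
      by move: (vP vt); rewrite -h setU11.
    case: ifP => // /andP[/and3P[va _ _] vu].
    have vt : v \notin t by rewrite ta in_setU1 negb_or vu va.
    rewrite (_ : z (v |: a) = 0) ?mulr0 //; apply/eqP/negP => /negP/zw.
    by rewrite big_U1 vb ba cardsU1 (vP vt) Pm add1n ltnn.
  have cond : bdcond k.+2 t v = bdcond k.+1 a v && (v != u).
    apply/idP/idP.
      case/and3P => vt fa /eqP sz.
      have vu : v != u by apply: contraNneq vt => ->.
      have va : v \notin a by apply: contra vt; rewrite /a => /setD1P[].
      rewrite /bdcond va vu cardsU1 va sa eqxx andbT /=.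
      by rewrite andbT; apply: face_sub fa _; apply: setUS; rewrite /a subsetDl.
    case/andP => /and3P[va fa _] vu.
    have vt : v \notin t by rewrite ta in_setU1 negb_or vu va.
    rewrite /bdcond vt cardsU1 vt st add1n eqxx andbT /=.
    rewrite ta setUCA faceU1 vertex1 fa /=; apply/forall_inP => x xva.
    apply/implyP => xu; rewrite disjoints1; apply/negP => jx.
    have := big_of jx xu; move: xva; rewrite in_setU1 => /orP[/eqP ->|xa].
      by rewrite (negbTE vb).
    move=> xb; have xP : x \in P by rewrite -bt inE xb andbT ta in_setU1 xa orbT.
    by move: (jN xP); rewrite jx.
  rewrite cond; case: ifP => // /andP[/and3P[va fa sz] vu].
  have vt : v \notin t by rewrite ta in_setU1 negb_or vu va.
  rewrite ffunE in_setU1 ut orbT big_U1 (negbTE vb) bt eqxx /=.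
  have : bdcond k.+2 t v by rewrite cond /bdcond va fa sz vu.
  case/and3P => _ -> -> /=.
  rewrite setD1U1 // -/a sgn_U1self (sgn_U1 vt vu) sgn_U1self.
  have -> : sgn t v = sgn a v * (-1) ^+ (rk u < rk v).
    by rewrite ta sgn_U1 // eq_sym.
  have := sgn_swap vu.
  case: (rk v < rk u)%N; case: (rk u < rk v)%N; rewrite ?expr0 ?expr1 //=.
  1,2: by move=> _; rewrite ?mulr1 ?mulrN1 ?mulNr ?mulrN; congr (- _); exact: mulrCA.
rewrite eqL; move/eqP: cyc; rewrite addrC addr_eq0 => /eqP ->.
by rewrite mulNr mulrN opprK mulrA sgn_sq mul1r.
Qed.

End Step.

Lemma chainB k c1 c2 : is_chain k c1 -> is_chain k c2 -> is_chain k (c1 - c2).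
Proof.
move=> h1 h2 t; rewrite !ffunE; case: (eqVneq (c1 t) 0) => [->|/h1 //].
by rewrite sub0r oppr_eq0 => /h2.
Qed.

Lemma chainD k c1 c2 : is_chain k c1 -> is_chain k c2 -> is_chain k (c1 + c2).
Proof.
move=> h1 h2 t; rewrite !ffunE; case: (eqVneq (c1 t) 0) => [->|/h1 //].
by rewrite add0r => /h2.
Qed.

Lemma subE c1 c2 t : (c1 - c2) t = c1 t - c2 t. Proof. by rewrite !ffunE. Qed.
Lemma addE c1 c2 t : (c1 + c2) t = c1 t + c2 t. Proof. by rewrite !ffunE. Qed.

Definition Hz k m z := [/\ is_chain k.+1 z, bd k.+1 z = 0,
  (forall t, crit t -> z t = 0) & (forall s, z s != 0 -> (#|big s| <= m)%N)].
Definition Good k z := exists d, [/\ is_chain k.+2 d, z = bd k.+2 d &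
  (forall t, crit t -> d t = 0)].
Definition Sz m z := [set s | (z s != 0) && (#|big s| == m)].

Lemma step k m K z : (forall z', Hz k m z' -> (#|Sz m z'| <= K)%N -> Good k z') ->
  Hz k m z -> (#|Sz m z| <= K.+1)%N -> Good k z.
Proof.
move=> IH [zc zcyc zcr zw] zK.
have [S0|[s0 s0S]] := set_0Vmem (Sz m z).
  by apply: IH => //; rewrite S0 cards0.
move: (s0S); rewrite inE => /andP[zs0 /eqP Pm].
set P := big s0.
have [s0f s0k] := zc s0 zs0.
have [j jN] : exists j, j \notin cover P.
  case: (pickP [pred j | j \notin cover P]) => [j jN|cov]; first by exists j.
  exfalso; have covT : cover P = [set: 'I_n].
    by apply/setP => i; rewrite inE; move: (cov i) => /= /negbFE.
  move/faceP: s0f => [s0v s0d].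
  have s0P : s0 = P.
    apply/setP => x; apply/idP/idP; last by apply: (subsetP (big_sub _)).
    move=> xs; rewrite inE xs /=; rewrite ltnNge; apply/negP => xsm.
    have [i ix] := vertex_n0 (s0v _ xs).
    have : i \in cover P by rewrite covT inE.
    case/bigcupP => y yP iy.
    have ys : y \in s0 by apply: (subsetP (big_sub _)).
    have xy : x != y.
      apply: contraTneq yP => <-; rewrite inE xs /= ltnNge xsm //.
    by move/pred0P: (s0d _ _ xs ys xy) => /(_ i); rewrite /= ix iy.
  case/negP: zs0; apply/eqP; apply: zcr.
  apply/andP; split.
    apply/and3P; split; first by rewrite s0P covT.
      by apply/trivIsetP => A B As Bs AB; apply: s0d.
    by apply/negP => /s0v /andP[/negP].
  apply/forall_inP => x xs; have /andP[_ ->] := s0v _ xs.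
  by move: xs; rewrite {1}s0P inE => /andP[_ ->].
have jP : forall x, x \in P -> j \notin x.
  by move=> x xP; apply: contra jN => jx; apply/bigcupP; exists x.
set d := dd k z P j.
have K1' := K1 zc zcyc zw Pm jP.
have K2' := @K2 k z P j.
set z' := z - bd k.+2 d.
have Hz' : Hz k m z'.
  split.
  - by apply: chainB => //; apply: chain_bd.
  - by rewrite bdB bdbd zcyc subr0.
  - by move=> t ct; rewrite subE zcr // bd_crit ?subr0 //; case/andP: ct.
  - move=> s; rewrite subE; case: (eqVneq (z s) 0) => [->|/zw //].
    rewrite sub0r oppr_eq0 => /K2' sP; rewrite -Pm; exact: subset_leq_card.
have S'S : Sz m z' \subset Sz m z :\ s0.
  apply/subsetP => t; rewrite !inE => /andP[zt /eqP bt].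
  have nP : big t != P.
    by apply: contra zt => /eqP btP; rewrite subE K1' // subrr.
  have bd0 : bd k.+2 d t = 0.
    apply/eqP/negP => /negP /K2' sub; case/negP: nP; rewrite eqEcard sub /=.
    by rewrite bt Pm.
  move: zt; rewrite subE bd0 subr0 => ->; rewrite bt eqxx andbT /= andbT.
  by apply: contra nP => /eqP ->.
have [d' [d'c zd' d'cr]] : Good k z'.
  apply: IH => //; have h := subset_leq_card S'S.
  have e := cardsD1 s0 (Sz m z); rewrite s0S add1n in e.
  by apply: (leq_trans h); rewrite -ltnS -e.
exists (d' + d); split.
- by apply: chainD => //; apply: dd_chain.
- by rewrite bdD -zd' /z' subrK.
- move=> t ct; rewrite ffunE d'cr // add0r; apply/eqP/negP => /negP/dd_big[ut _].
  case/andP: ct => _ /forall_inP/(_ _ ut)/andP[]; rewrite cards1.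
  by [].
Qed.

Lemma reduceAll k m K z : Hz k m z -> (#|Sz m z| <= K)%N -> Good k z.
Proof.
elim: m K z => [|m IHm] K.
  elim: K => [|K IHK] z Hz0 zK; last by apply: step Hz0 zK.
  have z0 : z = 0.
    apply/ffunP => t; rewrite ffunE; apply/eqP/negP => /negP zt.
    case: Hz0 => _ _ _ /(_ t zt); rewrite leqn0 => bt.
    move: zK; rewrite leqn0 cards_eq0 => /eqP S0.
    have : t \in Sz 0 z by rewrite inE zt bt.
    by rewrite S0 inE.
  exists 0; split.
  - by move=> t; rewrite ffunE eqxx.
  - by rewrite bd0.
  - by move=> t _; rewrite ffunE.
elim: K => [|K IHK] z Hz0 zK; last by apply: step Hz0 zK.
apply: (IHm #|Sz m z|) => //.
case: Hz0 => zc zcyc zcr zw; split => // s zs.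
have := zw s zs; rewrite leq_eqVlt => /orP[/eqP bs|] //.
move: zK; rewrite leqn0 cards_eq0 => /eqP S0.
have : s \in Sz m.+1 z by rewrite inE zs bs eqxx.
by rewrite S0 inE.
Qed.

Lemma reduceB k z : is_chain k.+1 z -> bd k.+1 z = 0 ->
  (forall t, crit t -> z t = 0) -> Good k z.
Proof.
move=> zc zcyc zcr; apply: (@reduceAll k #|[set: V]| #|Sz #|[set: V]| z|) => //.
split => // s _; exact: subset_leq_card (subsetT _).
Qed.

Definition critq q := [set P : F | [&& partition P [set: 'I_n], #|P| == q.+1 &
        [forall B in P, (2 <= #|B|)%N && (B != [set: 'I_n])]]].

Lemma critq_crit q t : t \in critq q -> crit t.
Proof. by rewrite inE => /and3P[p _ f]; rewrite /crit p f. Qed.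

Lemma crit_face t : crit t -> is_face t.
Proof.
case/andP => /and3P[_ tr t0] /forall_inP h; apply/faceP; split.
  move=> x xt; rewrite /is_vertex; case/andP: (h x xt) => _ ->; rewrite andbT.
  by apply: contraNneq t0 => <-.
by move=> x y xt yt; apply: (trivIsetP tr).
Qed.

Lemma cycle_for q (c : F) : c \in critq q ->
  exists z, is_cycle q z /\ (forall t, crit t -> z t = (t == c)%:Z).
Proof.
move=> cq; have cc := critq_crit cq.
move: cq; rewrite inE => /and3P[cp /eqP cs cf].
case: q cs => [|q] cs.
  have [B cB] : exists B, c = [set B] by apply/cards1P; rewrite cs.
  move: cp => /and3P[/eqP cov _ _]; move/forall_inP: cf => /(_ B).
  by rewrite -cov cB /cover big_set1 inE eqxx => /(_ isT) /andP[_ /eqP].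
pose e : chain n := [ffun t => (t == c)%:Z].
have ec : is_chain q.+2 e.
  move=> t; rewrite ffunE; case: (eqVneq t c) => [->|] // _.
  by split; [apply: crit_face | rewrite cs].
have [d [dc ed dcr]] : Good q (bd q.+2 e).
  apply: reduceB; first exact: chain_bd.
    exact: bdbd.
  by move=> t /andP[tp _]; rewrite bd_crit.
exists (e - d); split; first split.
- exact: chainB.
- by rewrite bdB -ed subrr.
- by move=> t ct; rewrite subE dcr // subr0 ffunE.
Qed.

Lemma cycleD q c1 c2 : is_cycle q c1 -> is_cycle q c2 -> is_cycle q (c1 + c2).
Proof. by move=> [h1 b1] [h2 b2]; split; [apply: chainD | rewrite bdD b1 b2 addr0]. Qed.

Lemma cycleZ q c r : is_cycle q c -> is_cycle q (c *~ r).
Proof.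
move=> [h b]; split; last by rewrite bdZ b mul0rz.
move=> t; rewrite (ffunMzE c) => nz; apply: h; apply: contraNneq nz => ->.
by rewrite mul0rz.
Qed.

Lemma cycle0 q : is_cycle q (0 : chain n).
Proof. by split; [move=> t; rewrite ffunE eqxx | rewrite bd0]. Qed.

Lemma part1 q : reduced_homology_iso_Zpow n q (beta n q).
Proof.
pose f := fun c : chain n => [ffun i : 'I_#|critq q| => c (enum_val i)].
exists f; split; [|split].
- by move=> c1 c2 _ _; apply/ffunP => i; rewrite /f !ffunE.
- move=> y.
  have H (s : seq 'I_#|critq q|) : uniq s -> exists c, is_cycle q c /\
      forall i, f c i = if i \in s then y i else 0.
    elim: s => [|x s IH] /=.
      by move=> _; exists 0; split; [apply: cycle0 | move=> i; rewrite !ffunE].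
    case/andP => xs /IH [c [cc fc]].
    have [zx [zxc zxv]] := cycle_for (enum_valP x).
    exists (c + zx *~ y x); split; first by apply: cycleD => //; apply: cycleZ.
    move=> i; rewrite ffunE addE (ffunMzE zx) zxv ?(critq_crit (enum_valP i)) //.
    have := fc i; rewrite ffunE => ->; rewrite in_cons.
    case: (eqVneq i x) => [->|ix] /=; first by rewrite (negbTE xs) eqxx add0r -mulrzr mul1r intz.
    rewrite (_ : (enum_val i == enum_val x) = false); first by rewrite mul0rz addr0.
    by apply/negbTE; apply: contra ix => /eqP /enum_val_inj ->.
  have [c [cc fc]] := H (enum 'I_#|critq q|) (enum_uniq _).
  by exists c; split => //; apply/ffunP => i; rewrite fc mem_enum.
- move=> c cc; split.
    move=> fc; have [cch cb] := cc.
    have [d [dc cd _]] : Good q c.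
      apply: reduceB => // t ct; apply/eqP/negP => /negP ctn.
      have [_ ts] := cch t ctn.
      have tq : t \in critq q.
        by case/andP: ct => tp tf; rewrite inE tp ts eqxx tf.
      move/ffunP: fc => /(_ (enum_rank_in tq t)); rewrite !ffunE enum_rankK_in //.
      by move/eqP: ctn.
    by exists d.
  case=> d [_ ->]; apply/ffunP => i; rewrite ffunE [RHS]ffunE bd_crit //.
  by have /andP[] := critq_crit (enum_valP i).
Qed.

End Hom.



Lemma stirling_card (T : finType) (D : {set T}) k :
  #|[set Q : {set {set T}} | partition Q D && (#|Q| == k)]| = stirling2 #|D| k.
Proof.
rewrite /stirling2.
pose f := fun i : 'I_#|D| => @enum_val T (mem D) i.
have finj : injective f by apply: enum_val_inj.
have fim : f @: setT = D.
  apply/setP => x; apply/imsetP/idP => [[i _ ->]|xD]; first exact: enum_valP.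
  by exists (enum_rank_in xD x); rewrite // /f enum_rankK_in.
pose Phi := fun Q : {set {set 'I_#|D|}} => [set f @: (B : {set _}) | B in Q].
have Pinj : injective Phi by apply: imset_inj; apply: imset_inj.
have cPhi Q : #|Phi Q| = #|Q| by rewrite card_imset //; apply: imset_inj.
have -> : [set Q : {set {set T}} | partition Q D && (#|Q| == k)] =
   Phi @: [set Q : {set {set 'I_#|D|}} | partition Q [set: 'I_#|D|] && (#|Q| == k)].
  apply/setP => R; rewrite inE; apply/idP/imsetP => [/andP[Rp /eqP Rk]|[Q]].
    pose Q := [set f @^-1: (B : {set _}) | B in R].
    have fpre C : C \in R -> f @: (f @^-1: C) = C.
      move=> CR; apply/setP => x; apply/imsetP/idP => [[y]|xC]; first by rewrite inE => ? ->.
      have xD : x \in D by rewrite -(cover_partition Rp); apply/bigcupP; exists C.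
      have /imsetP[y _ xy] : x \in f @: setT by rewrite fim.
      by exists y => //; rewrite inE -xy.
    have PQ : Phi Q = R.
      rewrite /Phi /Q -imset_comp; apply/setP => B; apply/imsetP/idP => [[C CR ->]|BR].
        by rewrite /= fpre.
      by exists B => //=; rewrite fpre.
    exists Q => //; rewrite inE -cPhi PQ Rk eqxx andbT.
    by rewrite -(imset_partition _ _ finj) fim -/(Phi Q) PQ.
  rewrite inE => /andP[Qp /eqP Qk] ->; rewrite cPhi Qk eqxx andbT.
  by rewrite -fim /Phi imset_partition.
by rewrite card_imset.
Qed.

Lemma sum_card (T : finType) (B : {set T}) (g : nat -> int) :
  \sum_(A : {set T} | A \subset B) g #|A| = \sum_(i < #|B|.+1) g i *+ 'C(#|B|, i).
Proof.
rewrite (partition_big (fun A : {set T} => inord #|A| : 'I_#|B|.+1) xpredT) //=.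
apply: eq_bigr => i _.
rewrite (eq_bigl (fun A : {set T} => (A \subset B) && (#|A| == i))); last first.
  move=> A; case: (boolP (A \subset B)) => //= AB.
  by rewrite -val_eqE /= inordK // ltnS subset_leq_card.
rewrite (eq_bigr (fun _ => g i)); last by move=> A /andP[_ /eqP ->].
rewrite sumr_const -(cards_draws B i); congr (_ *+ _); apply: eq_card => A.
by rewrite inE.
Qed.

Lemma alt_sum (T : finType) (X : {set T}) :
  \sum_(A : {set T} | A \subset X) (-1) ^+ #|A| = (X == set0)%:R :> int.
Proof.
rewrite (sum_card X (fun i => (-1) ^+ i)).
transitivity ((1 + (-1)) ^+ #|X| : int); last by rewrite addrN expr0n cards_eq0.
by rewrite exprDn; apply: eq_bigr => i _; rewrite expr1n mul1r.
Qed.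

Definition Sing n (P : {set {set 'I_n}}) := [set i | [set i] \in P].
Definition SA n (A : {set 'I_n}) := [set [set a] | a in A].

Lemma cardSA n (A : {set 'I_n}) : #|SA A| = #|A|.
Proof. by rewrite card_imset //; apply: set1_inj. Qed.

Lemma SingSA n (A : {set 'I_n}) P : (A \subset Sing P) = (SA A \subset P).
Proof.
apply/subsetP/subsetP => h x.
  by case/imsetP => a aA ->; move: (h a aA); rewrite inE.
by move=> xA; rewrite inE; apply: h; apply: imset_f.
Qed.

Lemma coverSA n (A : {set 'I_n}) : cover (SA A) = A.
Proof.
rewrite /SA cover_imset; apply/setP => x; apply/bigcupP/idP => [[a aA]|xA].
  by rewrite inE => /eqP ->.
by exists x; rewrite ?inE.
Qed.

Lemma trivSA n (A : {set 'I_n}) : trivIset (SA A).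
Proof.
apply/trivIsetP => B C /imsetP[a _ ->] /imsetP[b _ ->] ab.
by rewrite disjoints1 inE; apply: contra ab => /eqP ->.
Qed.

Lemma NA n k (A : {set 'I_n}) :
  #|[set P : {set {set 'I_n}} | [&& partition P [set: 'I_n], #|P| == k & A \subset Sing P]]|
  = if (#|A| <= k)%N then stirling2 (n - #|A|) (k - #|A|) else 0%N.
Proof.
case: ifP => Ak; last first.
  apply/eqP; rewrite cards_eq0; apply/eqP/setP => P; rewrite !inE.
  apply/negP => /and3P[_ /eqP Pk]; rewrite SingSA => /subset_leq_card.
  by rewrite cardSA Pk Ak.
have cC : #|~: A| = (n - #|A|)%N.
  by have h := cardsC A; rewrite card_ord in h; rewrite -[X in (X - _)%N]h addKn.
rewrite -cC -stirling_card.
set S := SA A.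
have Sd Q : partition Q (~: A) -> [disjoint Q & S].
  move=> Qp; rewrite -setI_eq0; apply/eqP/setP => B; rewrite !inE.
  apply/negP => /andP[BQ /imsetP[a aA Ba]].
  have : a \in cover Q by apply/bigcupP; exists B; rewrite // Ba inE.
  by rewrite (cover_partition Qp) inE aA.
rewrite -[RHS](@card_in_imset _ _ (fun Q => Q :|: S)); last first.
  move=> Q1 Q2; rewrite !inE => /andP[Q1p _] /andP[Q2p _] e.
  have := congr1 (fun X => X :\: S) e; rewrite !setDUl setDv !setU0.
  by rewrite (setDidPl (Sd _ Q1p)) (setDidPl (Sd _ Q2p)).
apply: eq_card => P; rewrite inE; apply/idP/imsetP.
  case/and3P => Pp /eqP Pk; rewrite SingSA -/S => SP.
  exists (P :\: S).
    rewrite inE cardsDS // Pk cardSA eqxx andbT.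
    apply/and3P; split.
    - apply/eqP/setP => x; rewrite inE; apply/bigcupP/idP => [[B]|xA].
        rewrite inE => /andP[BS BP] xB; apply/negP => xA; case/negP: BS.
        have xP : [set x] \in P by apply: (subsetP SP); apply: imset_f.
        rewrite (_ : B = [set x]) ?imset_f //.
        apply/eqP; apply: contraT => Bx.
        have := trivIsetP (partition_trivIset Pp) _ _ BP xP Bx.
        by move/pred0P/(_ x); rewrite /= xB inE eqxx.
      have : x \in cover P by rewrite (cover_partition Pp) inE.
      case/bigcupP => B BP xB; exists B => //; rewrite inE BP andbT.
      apply/negP => /imsetP[a aA Ba]; move: xB; rewrite Ba inE => /eqP xa.
      by move: xA; rewrite xa aA.
    - exact: trivIsetD (partition_trivIset Pp).
    - by rewrite inE negb_and; case/and3P: Pp => _ _ ->; rewrite orbT.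
  apply/setP => B; rewrite !inE; case: (boolP (B \in S)) => BS /=; last by rewrite orbF.
  by rewrite (subsetP SP).
case=> Q; rewrite inE => /andP[Qp /eqP Qk] ->.
rewrite SingSA subsetUr andbT; apply/andP; split.
  apply/and3P; split.
  - apply/eqP; rewrite /cover bigcup_setU -/(cover Q) -/(cover S).
    by rewrite (cover_partition Qp) coverSA setUC setUCr.
  - apply: trivIsetU; first by case/and3P: Qp.
      exact: trivSA.
    by rewrite (cover_partition Qp) coverSA disjoint_sym disjoints_subset setCK.
  - rewrite inE negb_or; case/and3P: Qp => _ _ ->.
    by apply/negP => /imsetP[a _ /esym/eqP]; rewrite -subset0 sub1set inE.
rewrite cardsU (_ : Q :&: S = set0) ?cards0 ?subn0 ?Qk ?cardSA ?subnK //.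
by apply/eqP; rewrite setI_eq0 Sd.
Qed.

Lemma beta_sing n q : (0 < q)%N -> beta n q =
  #|[set P : {set {set 'I_n}} | [&& partition P [set: 'I_n], #|P| == q.+1 & Sing P == set0]]|.
Proof.
move=> q0; apply: eq_card => P; rewrite !inE; case: (boolP (partition P _)) => //= Pp.
case: (eqVneq #|P| q.+1) => //= Pk.
apply/forall_inP/eqP => [h|S0 B BP].
  apply/setP => i; rewrite !inE; apply/negP => /h; rewrite cards1 /=.
  by [].
have B0 : B != set0 by apply: contraTneq BP => ->; case/and3P: Pp.
apply/andP; split.
  rewrite ltnNge; apply/negP => B1.
  have [i Bi] : exists i, B = [set i].
    by apply/cards1P; rewrite eqn_leq B1 card_gt0.
  have : i \in Sing P by rewrite inE -Bi.
  by rewrite S0 inE.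
apply/negP => /eqP BT.
have [C CP CB] : exists2 C, C \in P & C != B.
  case: (boolP [exists C in P, C != B]) => [/exists_inP //|/exists_inPn h]; exfalso.
  have : P \subset [set B] by apply/subsetP => C CP; rewrite inE; move: (h C CP); rewrite negbK.
  move/subset_leq_card; rewrite cards1 Pk ltnS leqn0 => /eqP q00.
  by move: q0; rewrite q00.
have C0 : C != set0 by apply: contraTneq CP => ->; case/and3P: Pp.
have := trivIsetP (partition_trivIset Pp) _ _ CP BP CB.
rewrite BT => /pred0P h0; case/set0Pn: C0 => x xC.
by move: (h0 x); rewrite /= xC inE.
Qed.

Lemma formula n q : (0 < q)%N -> (q <= n - 1)%N ->
  (beta n q)%:Z = \sum_(0 <= i < q.+2)
        (-1) ^+ i * ('C(n, i))%:Z * (stirling2 (n - i) (q.+1 - i))%:Z.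
Proof.
move=> q0 qn; rewrite beta_sing //.
have kn : (q.+1 <= n)%N by lia.
set k := q.+1.
pose pk := fun P : {set {set 'I_n}} => partition P [set: 'I_n] && (#|P| == k).
pose h := fun i => if (i <= k)%N then stirling2 (n - i) (k - i) else 0%N.
have e1 : (#|[set P : {set {set 'I_n}} | [&& partition P [set: 'I_n], #|P| == k & Sing P == set0]]|)%:Z
    = \sum_(P | pk P) ((Sing P == set0)%:R : int).
  rewrite -sum1_card -natz natr_sum big_mkcond [RHS]big_mkcond; apply: eq_bigr => P _.
  by rewrite inE /pk; case: (partition P _); case: (#|P| == k); case: (Sing P == set0).
rewrite e1.
rewrite (eq_bigr (fun P => \sum_(A : {set 'I_n} | A \subset Sing P) (-1) ^+ #|A|)); last first.
  by move=> P _; rewrite alt_sum.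
rewrite (exchange_big_dep xpredT) //=.
rewrite (eq_bigr (fun A : {set 'I_n} => (-1) ^+ #|A| *+ h #|A|)); last first.
  move=> A _; rewrite /h -NA -sumr_const; apply: eq_bigl => P.
  by rewrite inE /pk andbA.
rewrite (eq_bigl (fun A : {set 'I_n} => A \subset [set: 'I_n])); last by move=> A; rewrite subsetT.
rewrite (sum_card [set: 'I_n] (fun i => (-1) ^+ i *+ h i)) cardsT card_ord.
rewrite -(big_mkord xpredT (fun i => (-1) ^+ i *+ h i *+ 'C(n, i))).
rewrite (@big_cat_nat _ _ _ k.+1) //= [X in _ + X]big1_seq ?addr0; last first.
  move=> i /andP[_]; rewrite mem_index_iota => /andP[ki _].
  by rewrite /h leqNgt ki /= mulr0n mul0rn.
apply: eq_big_nat => i /andP[_ ik].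
rewrite ltnS in ik; rewrite /h ik -mulrnA -mulr_natr natz PoszM mulrA mulrAC.
by [].
Qed.

Lemma beta0 n q : (q = 0%N \/ (n./2 - 1 < q)%N) -> beta n q = 0%N.
Proof.
move=> hq; apply/eqP; rewrite cards_eq0; apply/eqP/setP => P; rewrite !inE.
apply/negP => /and3P[Pp /eqP Pk /forall_inP h].
case: hq => [q0|hq].
  move: Pk; rewrite q0 => /eqP/cards1P[B PB].
  have := h B; rewrite PB inE eqxx => /(_ isT) /andP[_].
  by rewrite -(cover_partition Pp) PB cover1 eqxx.
have := card_partition Pp; rewrite cardsT card_ord => nE.
have : (\sum_(B in P) 2 <= \sum_(B in P) #|B|)%N.
  by apply: leq_sum => B BP; case/andP: (h B BP).
rewrite sum_nat_const -nE Pk => h2.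
have : (q.+1 <= n./2)%N.
  by rewrite -[q.+1](doubleK) half_leq // -mul2n mulnC.
by lia.
Qed.


Theorem theorem1 (n q : nat) (hn : (2 <= n)%N) (hq : (q <= n - 1)%N) :
  reduced_homology_iso_Zpow n q (beta n q) /\
  ((q = 0%N \/ (n./2 - 1 < q)%N) -> reduced_homology_iso_Zpow n q 0) /\
  ((0 < q)%N ->
     (beta n q)%:Z = \sum_(0 <= i < q.+2)
        (-1) ^+ i * ('C(n, i))%:Z * (stirling2 (n - i) (q.+1 - i))%:Z).
Proof.
have n2 : (1 < n)%N by [].
split; first exact: part1.
split; last by move=> q0; apply: formula.
by move=> h; have := part1 n2 q; rewrite beta0.
Qed.
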